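(* Let $A\in\mathbb R^{n\times p}$ and $B\in\mathbb R^{n\times q}$ have columns $a_1,\dots,a_p$ and $b_1,\dots,b_q$ respectively. Let \[C=[a_1\circ b_1,\ a_1\circ b_2,\ \dots,\ a_2\circ b_1,\ \dots,\ a_p\circ b_q]\in\mathbb R^{n\times pq},\] \[\phi:\mathbb R^n\to\mathbb R^n,\ d\mapsto \operatorname{diag}(AA'\operatorname{diag}^*(d)BB'),\qquad \psi:\mathbb R^{p\times q}\to\mathbb R^n,\ \Delta\mapsto\operatorname{diag}(A\Delta B').\] Then $\mathcal R(\phi)=\mathcal R(\psi)=\mathcal R((AA')\circ(BB'))=\mathcal R(C)$.
   Context: $\circ$ denotes the entrywise (Schur) product of vectors or matrices. $\operatorname{diag}:\mathbb R^{n\times n}\to\mathbb R^n$ maps a matrix to the vector of its diagonal entries, and $\operatorname{diag}^*:\mathbb R^n\to\mathbb R^{n\times n}$ maps a vector $d$ to the diagonal matrix with diagonal $d$. $\mathcal R(\cdot)$ denotes the range (image) of a linear map or matrix. *)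

(* Defs.v *)
From mathcomp Require Import all_boot all_order all_algebra.
Set Implicit Arguments. Unset Strict Implicit. Unset Printing Implicit Defensive.
Import GRing.Theory Num.Theory.
Local Open Scope ring_scope.

Definition mdiag {R : ringType} {n : nat} (M : 'M[R]_n) : 'cV[R]_n :=
  \col_i M i i.

Definition mdiag_star {R : ringType} {n : nat} (d : 'cV[R]_n) : 'M[R]_n :=
  diag_mx d^T.

Definition schur {R : ringType} {m n : nat} (M N : 'M[R]_(m, n)) : 'M[R]_(m, n) :=
  \matrix_(i, j) (M i j * N i j).

(* C = [a_1 o b_1, a_1 o b_2, ..., a_p o b_q]: column number
   mxvec_index i j (= i*q + j) is a_i o b_j. *)
Definition khatri_C {R : ringType} {n p q : nat}
  (A : 'M[R]_(n, p)) (B : 'M[R]_(n, q)) : 'M[R]_(n, p * q) :=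
  \matrix_(k, l) (mxvec (\matrix_(i < p, j < q) (A k i * B k j)) 0 l).

Definition phi_map {R : ringType} {n p q : nat}
  (A : 'M[R]_(n, p)) (B : 'M[R]_(n, q)) (d : 'cV[R]_n) : 'cV[R]_n :=
  mdiag (A *m A^T *m mdiag_star d *m B *m B^T).

Definition psi_map {R : ringType} {n p q : nat}
  (A : 'M[R]_(n, p)) (B : 'M[R]_(n, q)) (D : 'M[R]_(p, q)) : 'cV[R]_n :=
  mdiag (A *m D *m B^T).

Definition range_of {X Y : Type} (f : X -> Y) (y : Y) : Prop :=
  exists x, f x = y.

Definition mx_range {R : ringType} {m k : nat} (M : 'M[R]_(m, k))
  (v : 'cV[R]_m) : Prop :=
  exists x : 'cV[R]_k, M *m x = v.

(* Main.v *)
Require Import Defs.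
From mathcomp Require Import all_boot all_order all_algebra.
From mathcomp Require Import ring.
Set Implicit Arguments. Unset Strict Implicit. Unset Printing Implicit Defensive.
Import GRing.Theory Num.Theory.
Local Open Scope ring_scope.

Lemma sum_mxvec (R : ringType) p q (F : 'I_(p*q) -> R) (G : 'I_p -> 'I_q -> R) :
  (forall i j, F (mxvec_index i j) = G i j) ->
  \sum_l F l = \sum_i \sum_j G i j.
Proof.
move=> FG; rewrite (reindex _ (curry_mxvec_bij _ _)) /= pair_bigA.
by apply: eq_bigr => [[i j]] _ /=; rewrite FG.
Qed.

Lemma khatriE (R : ringType) n p q (A : 'M[R]_(n, p)) (B : 'M[R]_(n, q)) k i j :
  khatri_C A B k (mxvec_index i j) = A k i * B k j.
Proof. by rewrite mxE mxvecE mxE. Qed.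

Lemma psi_C (R : comRingType) n p q (A : 'M[R]_(n, p)) (B : 'M[R]_(n, q)) D :
  psi_map A B D = khatri_C A B *m (mxvec D)^T.
Proof.
apply/colP => k; rewrite !mxE.
rewrite (sum_mxvec (G:=fun i j => A k i * B k j * D i j)); last first.
  by move=> i j; rewrite khatriE !mxE mxvecE.
rewrite exchange_big; apply: eq_bigr => j _; rewrite ?mxE big_distrl /=.

by apply: eq_bigr => i _; rewrite ?mxE; ring.
Qed.

Lemma schur_C (R : comRingType) n p q (A : 'M[R]_(n, p)) (B : 'M[R]_(n, q)) :
  schur (A *m A^T) (B *m B^T) = khatri_C A B *m (khatri_C A B)^T.
Proof.
apply/matrixP => k l; rewrite !mxE.
rewrite (sum_mxvec (G:=fun i j => A k i * B k j * (A l i * B l j))); last first.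
  by move=> i j; rewrite [X in _ * X]mxE !khatriE.
rewrite big_distrl /=; apply: eq_bigr => i _; rewrite big_distrr /=.
by apply: eq_bigr => j _; rewrite !mxE; ring.
Qed.

Lemma phi_S (R : comRingType) n p q (A : 'M[R]_(n, p)) (B : 'M[R]_(n, q)) d :
  phi_map A B d = schur (A *m A^T) (B *m B^T) *m d.
Proof.
apply/colP => k; rewrite /phi_map /mdiag /mdiag_star.
have -> : A *m A^T *m diag_mx d^T *m B *m B^T =
   (A *m A^T) *m (diag_mx d^T *m (B *m B^T)) by rewrite !mulmxA.
rewrite mul_diag_mx !mxE; apply: eq_bigr => l _; rewrite !mxE.
have -> : \sum_j B l j * B^T j k = \sum_j B k j * B^T j l.
  by apply: eq_bigr => j _; rewrite !mxE mulrC.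
ring.
Qed.
From mathcomp Require Import zify.

Lemma rv_self_eq0 (R : realFieldType) m (w : 'rV[R]_m) : w *m w^T = 0 -> w = 0.
Proof.
move=> /matrixP /(_ 0 0); rewrite !mxE => H.
have {}H : \sum_j w 0 j * w 0 j = 0.
  by rewrite -[RHS]H; apply: eq_bigr => j _; rewrite mxE.
have H' := psumr_eq0P (P := predT) (F := fun j => w 0 j * w 0 j) _ H.
apply/rowP => j; rewrite mxE; apply/eqP; rewrite -sqrf_eq0 expr2.
apply/eqP; apply: H' => //= l _.
  by rewrite -expr2 sqr_ge0.
Qed.

Lemma ker_CCt (R : realFieldType) n m (C : 'M[R]_(n, m)) :
  (kermx (C *m C^T) <= kermx C)%MS.
Proof.
apply/row_subP => i; apply/sub_kermxP.
set u := row i _.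
have hu : u *m (C *m C^T) = 0 by rewrite /u -row_mul mulmx_ker row0.
apply: rv_self_eq0.
by rewrite trmx_mul mulmxA -(mulmxA u) hu mul0mx.
Qed.

Lemma range_CCt (R : realFieldType) n m (C : 'M[R]_(n, m)) :
  exists E : 'M[R]_(n, m), C = C *m C^T *m E.
Proof.
have sub1 : (C *m C^T <= C^T)%MS by apply: submxMl.
have hr : \rank (C *m C^T) = \rank C^T.
  apply/eqP; rewrite eqn_leq mxrankS //= mxrank_tr.
  have := mxrankS (ker_CCt C); rewrite !mxrank_ker.
  have := rank_leq_row (C *m C^T); have := rank_leq_row C; lia.
have /submxP [D hD] : (C^T <= C *m C^T)%MS.
  by have [_ <-] := mxrank_leqif_sup sub1; rewrite hr.
exists D^T; apply: trmx_inj; rewrite !trmx_mul !trmxK; exact: hD.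
Qed.

Theorem lemma6 (R : realFieldType) (n p q : nat)
  (A : 'M[R]_(n, p)) (B : 'M[R]_(n, q)) :
  (forall v : 'cV[R]_n, range_of (phi_map A B) v <-> range_of (psi_map A B) v) /\
  (forall v : 'cV[R]_n, range_of (psi_map A B) v <->
                         mx_range (schur (A *m A^T) (B *m B^T)) v) /\
  (forall v : 'cV[R]_n, mx_range (schur (A *m A^T) (B *m B^T)) v <->
                         mx_range (khatri_C A B) v).
Proof.
set C := khatri_C A B.
have rS : forall v, mx_range (schur (A *m A^T) (B *m B^T)) v <-> mx_range C v.
  move=> v; rewrite schur_C; split=> [[x <-]|[x <-]].
    by exists (C^T *m x); rewrite mulmxA.
  have [E hE] := range_CCt C.
  by exists (E *m x); rewrite mulmxA {1}hE.
have rphi : forall v, range_of (phi_map A B) v <->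
                      mx_range (schur (A *m A^T) (B *m B^T)) v.
  by move=> v; split=> [[d <-]|[d <-]]; exists d; rewrite phi_S.
have rpsi : forall v, range_of (psi_map A B) v <-> mx_range C v.
  move=> v; split=> [[D <-]|[x <-]].
    by exists (mxvec D)^T; rewrite psi_C.
  by exists (vec_mx x^T); rewrite psi_C vec_mxK trmxK.
split; last split.
- by move=> v; rewrite rphi rS rpsi.
- by move=> v; rewrite rS rpsi.
- exact: rS.
Qed.
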